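(* Let $I$ be a finite tree, $I=I^+\sqcup I^-$ its bipartition, $\Gamma_0$ the alternating orientation in which every vertex of $I^+$ is a source, $\Sigma_+=\prod_{i\in I^+}\Sigma_i$ and $\Sigma_-=\prod_{i\in I^-}\Sigma_i$ (each regarded as a morphism $\Gamma_0\to\Gamma_0^{\mathrm{op}}$ or $\Gamma_0^{\mathrm{op}}\to\Gamma_0$, as composability requires). Then: (a) the automorphism group $\mathrm{Aut}_{R_0(I)}(\Gamma_0)$ is generated by $\Sigma_+\Sigma_-$ and $\Sigma_-\Sigma_+$; (b) the automorphism group $\mathrm{Aut}_{R(I)}(\Gamma_0)$ is generated by $D\Sigma_+$ and $D\Sigma_-$.
   Context: Let $I$ be a finite tree (connected, acyclic finite graph). $\mathrm{Quiv}(I)$ is the set of orientations of $I$. For $\Gamma\in\mathrm{Quiv}(I)$ and a vertex $i$ that is a source or sink of $\Gamma$, $s_i\Gamma$ is the orientation obtained by reversing all arrows at $i$; $\Gamma^{\mathrm{op}}$ is obtained by reversing all arrows. The groupoid $R_0(I)$ has object set $\mathrm{Quiv}(I)$ and is generated by elementary isomorphisms $\Sigma_i:\Gamma\to s_i\Gamma$ (one for each $\Gamma$ and each source or sink $i$ of $\Gamma$), subject to the relations (whenever both sides are defined): (R1) $\Sigma_i^2=1$; (R2) $\Sigma_i\Sigma_j=\Sigma_j\Sigma_i$ whenever $i,j$ are not adjacent in $I$. The groupoid $R(I)$ has the same objects and is generated by the $\Sigma_i$ together with elementary isomorphisms $D:\Gamma\to\Gamma^{\mathrm{op}}$ for all $\Gamma$,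 subject to (R1), (R2) and (R3) $D^2=1$, (R4) $D\Sigma_i=\Sigma_iD$ for all $i$ (whenever defined). Composition is written right-to-left (in $\Sigma_i\Sigma_j$, $\Sigma_j$ is applied first). $I=I^+\sqcup I^-$ is a decomposition into two subsets with no edges inside either subset (unique up to swapping). Products $\Sigma_\pm$ are independent of the order by (R2). *)

(* Defs.v *)
From mathcomp Require Import all_boot.
From Stdlib Require Relation_Definitions Relation_Operators.
Set Implicit Arguments. Unset Strict Implicit. Unset Printing Implicit Defensive.

Section Reflection.
Variables (V : finType) (e : rel V).

Definition is_tree : Prop :=
  [/\ symmetric e, irreflexive e, (forall x y, connect e x y) &
      (forall p : seq V, uniq p -> 3 <= size p -> ~~ cycle e p)].

Definition is_bipartition (Ip : {set V}) : Prop :=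
  forall x y, e x y -> (x \in Ip) != (y \in Ip).

(* An orientation is a set of arrows (x,y) meaning x -> y. *)
Definition is_orientation (A : {set V * V}) : Prop :=
  (forall p, p \in A -> e p.1 p.2) /\
  (forall x y, e x y -> ((x, y) \in A) != ((y, x) \in A)).

Definition is_source (i : V) (A : {set V * V}) : bool :=
  [forall y, e i y ==> ((i, y) \in A)].
Definition is_sink (i : V) (A : {set V * V}) : bool :=
  [forall y, e i y ==> ((y, i) \in A)].

Definition sref (i : V) (A : {set V * V}) : {set V * V} :=
  [set p | if (p.1 == i) || (p.2 == i) then (p.2, p.1) \in A else p \in A].
Definition opp (A : {set V * V}) : {set V * V} := [set p | (p.2, p.1) \in A].

Definition Gamma0 (Ip : {set V}) : {set V * V} :=
  [set p | e p.1 p.2 && (p.1 \in Ip)].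

Inductive gen := Sig of V | Dg.

(* a letter is a generator together with a flag "formal inverse" *)
Definition letter := (gen * bool)%type.

Definition gstep (A : {set V * V}) (g : gen) : {set V * V} :=
  match g with Sig i => sref i A | Dg => opp A end.

(* wD = true : groupoid R(I) (D allowed);  wD = false : groupoid R_0(I) *)
Definition gdef (wD : bool) (A : {set V * V}) (g : gen) : bool :=
  match g with Sig i => is_source i A || is_sink i A | Dg => wD end.

(* the letter (g,false) at A is the generator g : A -> gstep A g;
   the letter (g,true) at A is the inverse of the generator g : gstep A g -> A
   (note gstep (gstep A g) g = A). *)
Definition ldef (wD : bool) (A : {set V * V}) (l : letter) : bool :=
  if l.2 then gdef wD (gstep A l.1) l.1 else gdef wD A l.1.

(* words are listed in order of application (first letter applied first) *)
Fixpoint valid (wD : bool) (A : {set V * V}) (w : seq letter) : bool :=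
  if w is l :: w' then ldef wD A l && valid wD (gstep A l.1) w' else true.

Fixpoint endpt (A : {set V * V}) (w : seq letter) : {set V * V} :=
  if w is l :: w' then endpt (gstep A l.1) w' else A.

Inductive rel_at (wD : bool) (A : {set V * V}) : seq letter -> seq letter -> Prop :=
  | RinvR g : valid wD A [:: (g, false); (g, true)] ->
      rel_at wD A [:: (g, false); (g, true)] [::]
  | RinvL g : valid wD A [:: (g, true); (g, false)] ->
      rel_at wD A [:: (g, true); (g, false)] [::]
  | R1 i : valid wD A [:: (Sig i, false); (Sig i, false)] ->
      rel_at wD A [:: (Sig i, false); (Sig i, false)] [::]
  | R2 i j : ~~ e i j ->
      valid wD A [:: (Sig j, false); (Sig i, false)] ->
      valid wD A [:: (Sig i, false); (Sig j, false)] ->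
      rel_at wD A [:: (Sig j, false); (Sig i, false)] [:: (Sig i, false); (Sig j, false)]
  | R3 : wD -> valid wD A [:: (Dg, false); (Dg, false)] ->
      rel_at wD A [:: (Dg, false); (Dg, false)] [::]
  | R4 i : wD ->
      valid wD A [:: (Sig i, false); (Dg, false)] ->
      valid wD A [:: (Dg, false); (Sig i, false)] ->
      rel_at wD A [:: (Sig i, false); (Dg, false)] [:: (Dg, false); (Sig i, false)].

Definition rw_step (wD : bool) (A : {set V * V}) (w w' : seq letter) : Prop :=
  exists u v l r, [/\ w = u ++ l ++ v, w' = u ++ r ++ v,
     valid wD A w, valid wD A w' & rel_at wD (endpt A u) l r].

(* equality of morphisms out of A in the presented groupoid *)
Definition weq (wD : bool) (A : {set V * V}) : Relation_Definitions.relation (seq letter) :=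
  Relation_Operators.clos_refl_sym_trans _ (rw_step wD A).

Definition winv (w : seq letter) : seq letter :=
  rev (map (fun l => (l.1, ~~ l.2)) w).

(* the subgroup of Aut(A) generated by (the classes of) loops a and b contains w *)
Definition in_gen2 (wD : bool) (A : {set V * V}) (a b w : seq letter) : Prop :=
  exists bs : seq (bool * bool),
    weq wD A w (flatten (map (fun c => let x := if c.1 then a else b in
                                       if c.2 then winv x else x) bs)).

Definition SigmaW (S : {set V}) : seq letter := [seq (Sig i, false) | i <- enum S].

End Reflection.

(* Main.v *)
Require Import Defs.
From mathcomp Require Import all_boot.
From Stdlib Require Relation_Definitions Relation_Operators.
Import Relation_Operators.
Set Implicit Arguments. Unset Strict Implicit. Unset Printing Implicit Defensive.

Section Gen.
Variables (V : finType) (e : rel V).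
Implicit Types (i j : V) (A : {set V * V}) (g : gen V) (u v w t l r : seq (letter V)).

Lemma sref_invol i A : sref i (sref i A) = A.
Proof.
apply/setP=> [[x y]]; rewrite !inE /=.
by case: (x == i) (y == i) => [] [] //=; rewrite orbC.
Qed.

Lemma opp_invol A : opp (opp A) = A.
Proof. by apply/setP=> [[x y]]; rewrite !inE. Qed.

Lemma gstep_invol A g : gstep (gstep A g) g = A.
Proof. by case: g => [i|] /=; rewrite ?sref_invol ?opp_invol. Qed.

Lemma sref_comm i j A : sref i (sref j A) = sref j (sref i A).
Proof.
apply/setP=> [[x y]]; rewrite !inE /=.
by case: (x == i) (y == i) (x == j) (y == j) => [] [] [] [].
Qed.

Lemma sref_opp i A : sref i (opp A) = opp (sref i A).
Proof.
apply/setP=> [[x y]]; rewrite !inE /=.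
by case: (x == i) (y == i) => [] [] /=; rewrite ?orbT ?orbF.
Qed.

Lemma src_sref i A : is_source e i (sref i A) = is_sink e i A.
Proof.
by apply/forallP/forallP=> H y; move: (H y); rewrite !inE /= eqxx ?orbT.
Qed.

Lemma snk_sref i A : is_sink e i (sref i A) = is_source e i A.
Proof.
by apply/forallP/forallP=> H y; move: (H y); rewrite !inE /= eqxx ?orbT.
Qed.

Lemma src_opp i A : is_source e i (opp A) = is_sink e i A.
Proof. by apply/forallP/forallP=> H y; move: (H y); rewrite !inE. Qed.
Lemma snk_opp i A : is_sink e i (opp A) = is_source e i A.
Proof. by apply/forallP/forallP=> H y; move: (H y); rewrite !inE. Qed.

Lemma gdef_step wD A g : gdef e wD (gstep A g) g = gdef e wD A g.
Proof. by case: g => [i|] //=; rewrite src_sref snk_sref orbC. Qed.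

Lemma valid_cat wD A u w :
  valid e wD A (u ++ w) = valid e wD A u && valid e wD (endpt A u) w.
Proof. by elim: u A => [|l u IH] A //=; rewrite IH andbA. Qed.

Lemma endpt_cat A u w : endpt (endpt A u) w = endpt A (u ++ w).
Proof. by elim: u A => [|l u IH] A //=. Qed.

Lemma rel_endpt wD A l r : rel_at e wD A l r -> endpt A l = endpt A r.
Proof.
case=> /= *; rewrite ?gstep_invol ?sref_invol ?opp_invol //.
- by rewrite sref_comm.
- by rewrite sref_opp.
Qed.

Lemma rel_valid wD A l r : rel_at e wD A l r -> valid e wD A l /\ valid e wD A r.
Proof. by case=> //=. Qed.

Lemma rw_props wD A w w' : rw_step e wD A w w' ->
  valid e wD A w = valid e wD A w' /\ endpt A w = endpt A w'.
Proof.
case=> [u [v [l [r [-> -> H1 H2 Hr]]]]]; rewrite H1 H2; split=> //.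
by rewrite -[in LHS]endpt_cat -[in RHS]endpt_cat -!(endpt_cat _ l) -(endpt_cat _ r) (rel_endpt Hr).
Qed.

Lemma weq_props wD A w w' : weq e wD A w w' ->
  valid e wD A w = valid e wD A w' /\ endpt A w = endpt A w'.
Proof.
elim=> [x y /rw_props //|x|x y _ [-> ->]|x y z _ [-> ->] _ [-> ->]] //.
Qed.

Lemma weq_refl wD A w : weq e wD A w w.
Proof. exact: rst_refl. Qed.
Lemma weq_sym wD A w w' : weq e wD A w w' -> weq e wD A w' w.
Proof. exact: rst_sym. Qed.
Lemma weq_trans wD A w1 w2 w3 :
  weq e wD A w1 w2 -> weq e wD A w2 w3 -> weq e wD A w1 w3.
Proof. exact: rst_trans. Qed.

Lemma weq_cong wD A u v v' t : weq e wD (endpt A u) v v' ->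
  valid e wD A (u ++ v ++ t) -> weq e wD A (u ++ v ++ t) (u ++ v' ++ t).
Proof.
move=> H.
have key : forall v1 v2, weq e wD (endpt A u) v1 v2 ->
   (valid e wD A (u ++ v1 ++ t) = valid e wD A (u ++ v2 ++ t)) /\
   (valid e wD A (u ++ v1 ++ t) -> weq e wD A (u ++ v1 ++ t) (u ++ v2 ++ t)).
  move=> v1 v2 H12; have [Hv He] := weq_props H12.
  have Hval : valid e wD A (u ++ v1 ++ t) = valid e wD A (u ++ v2 ++ t).
    by rewrite !valid_cat Hv He.
  split=> //; elim: H12 Hval {Hv He} => [x y Hs|x|x y _ IH|x y z H1 IH1 H2 IH2] Hval Hx.
  - apply: rst_step; case: Hs Hval Hx => [u1 [v1' [l [r [-> -> Hv1 Hv2 Hr]]]]] Hval Hx.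
    exists (u ++ u1), (v1' ++ t), l, r; split.
    + by rewrite -!catA.
    + by rewrite -!catA.
    + by move: Hx; rewrite -!catA.
    + by move: Hx; rewrite Hval -!catA.
    + by rewrite -endpt_cat.
  - exact: rst_refl.
  - apply: rst_sym; apply: IH; rewrite ?Hval //; by rewrite -Hval.
  - have [Hv1 He1] := weq_props H1.
    have Hvy : valid e wD A (u ++ x ++ t) = valid e wD A (u ++ y ++ t).
      by rewrite !valid_cat Hv1 He1.
    apply: rst_trans (IH1 Hvy Hx) (IH2 _ _); first by rewrite -Hvy.
    by rewrite -Hvy.
by move=> Hv; apply: (key _ _ H).2.
Qed.

Lemma weq_rel wD A u l r t : rel_at e wD (endpt A u) l r ->
  valid e wD A (u ++ l ++ t) -> weq e wD A (u ++ l ++ t) (u ++ r ++ t).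
Proof.
move=> Hr Hv; apply: rst_step; exists u, t, l, r; split=> //.
move: Hv; rewrite !valid_cat -(rel_endpt Hr).
by have [_ ->] := rel_valid Hr; case/andP=> -> /andP[_ ->].
Qed.

End Gen.

Section Gen2.
Variables (V : finType) (e : rel V).
Implicit Types (i j : V) (A : {set V * V}) (g : gen V) (u v w t l r : seq (letter V)) (s : seq V).

Definition Lw s : seq (letter V) := [seq (Sig i, false) | i <- s].
Definition nl (l : letter V) : letter V := (l.1, false).

Lemma valid_Lcons wD A i s : valid e wD A (Lw (i :: s)) =
  (is_source e i A || is_sink e i A) && valid e wD (sref i A) (Lw s).
Proof. by []. Qed.

Lemma endpt_Lcons A i s : endpt A (Lw (i :: s)) = endpt (sref i A) (Lw s).
Proof. by []. Qed.

Lemma rel_sq wD B g : gdef e wD B g -> rel_at e wD B [:: (g, false); (g, false)] [::].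
Proof.
case: g => [i|] /= H.
  by apply: R1; rewrite /= /ldef /= H /= src_sref snk_sref orbC H.
by apply: R3 => //=; rewrite /ldef /= H.
Qed.

Lemma rel_inv wD B g : gdef e wD B g -> rel_at e wD B [:: (g, false); (g, true)] [::].
Proof.
move=> H; apply: RinvR; rewrite /= /ldef /= gstep_invol H /=.
by case: g H => //= i H; rewrite andbT src_sref snk_sref orbC.
Qed.

Lemma flag_one wD A u g t : valid e wD A (u ++ (g, true) :: t) ->
  weq e wD A (u ++ (g, true) :: t) (u ++ (g, false) :: t).
Proof.
move=> Hv; move: (Hv); rewrite valid_cat /= /ldef /= gdef_step.
case/and3P=> Hu Hg Ht.
have W1 : valid e wD A (u ++ [:: (g, false); (g, false)] ++ (g, true) :: t).
  by rewrite valid_cat Hu /= /ldef /= gstep_invol !gdef_step Hg Ht.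
have H1 := weq_rel (rel_sq Hg) W1; rewrite /= in H1.
apply: weq_trans (weq_sym H1) _.
have -> : u ++ [:: (g, false); (g, false)] ++ (g, true) :: t =
          (u ++ [:: (g, false)]) ++ [:: (g, false); (g, true)] ++ t by rewrite -catA.
have -> : u ++ (g, false) :: t = (u ++ [:: (g, false)]) ++ [::] ++ t by rewrite -catA.
apply: weq_rel.
  by rewrite -endpt_cat /=; apply: rel_inv; rewrite gdef_step.
by move: W1; rewrite -catA.
Qed.

Lemma norm_flags wD A w : valid e wD A w -> weq e wD A w (map nl w).
Proof.
elim: w A => [|l w IH] A /=; first by move=> _; exact: weq_refl.
case/andP=> Hl Hw.
apply: (@weq_trans _ _ _ _ _ (l :: map nl w)).
  have := @weq_cong _ e wD A [:: l] w (map nl w) [::] (IH _ Hw).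
  by rewrite !cats0 /=; apply; rewrite Hl.
case: l Hl Hw => g [] Hl Hw; last exact: weq_refl.
have := @flag_one wD A [::] g (map nl w); apply.
rewrite /= Hl /=; have [<- _] := weq_props (IH _ Hw); by rewrite Hw.
Qed.

Lemma weq_ft A w w' : weq e false A w w' -> weq e true A w w'.
Proof.
have vft : forall B x, valid e false B x -> valid e true B x.
  move=> B x; elim: x B => [|[g b] x IH] B //= /andP[H1 /IH ->].
  by rewrite andbT; case: b H1; case: g.
elim=> [x y [u [v [l [r [-> -> H1 H2 Hr]]]]]|x|x y _ IH|x y z _ IH1 _ IH2].
- apply: rst_step; exists u, v, l, r; split; rewrite ?vft //.
  case: Hr => *; first [ by apply: RinvR; rewrite vft
                       | by apply: RinvL; rewrite vft
                       | by apply: R1; rewrite vft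
                       | by apply: R2; rewrite ?vft
                       | done ].
- exact: rst_refl.
- exact: rst_sym.
- exact: rst_trans IH1 IH2.
Qed.

Lemma rotate wD A i s : valid e wD A (Lw (i :: s)) -> endpt A (Lw (i :: s)) = A ->
  weq e wD (sref i A) (Lw (s ++ [:: i])) [::] -> weq e wD A (Lw (i :: s)) [::].
Proof.
move=> Hv He Hw.
have Hg : gdef e wD A (Sig i) by case/andP: Hv.
have W1 : valid e wD A (Lw (i :: s) ++ [:: (Sig i, false); (Sig i, false)] ++ [::]).
  by rewrite valid_cat Hv He; move: Hg => /= Hg; rewrite /= /ldef /= Hg src_sref snk_sref orbC Hg.
have H2 : weq e wD A (Lw (i :: s) ++ [:: (Sig i, false); (Sig i, false)]) (Lw (i :: s)).
  have := weq_rel (rel_sq (g := Sig i) (B := endpt A (Lw (i :: s))) _) W1.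
  by rewrite He cat0s !cats0; apply.
apply: weq_trans (weq_sym H2) _.
have -> : Lw (i :: s) ++ [:: (Sig i, false); (Sig i, false)] =
          [:: (Sig i, false)] ++ Lw (s ++ [:: i]) ++ [:: (Sig i, false)].
  by rewrite /Lw map_cat /= -catA.
apply: weq_trans.
  apply: weq_cong; first exact: Hw.
  by move: W1; rewrite /Lw map_cat /= -catA.
have := @weq_rel _ e wD A [::] _ _ [::] (rel_sq Hg); rewrite /=; apply.
by move: Hg => /= Hg; rewrite /= /ldef /= Hg src_sref snk_sref orbC Hg.
Qed.

Lemma cancel_rev wD A s : valid e wD A (Lw s) ->
  [/\ valid e wD A (Lw (s ++ rev s)), endpt A (Lw (s ++ rev s)) = A &
      weq e wD A (Lw (s ++ rev s)) [::]].
Proof.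
elim: s A => [|i s IH] A; first by move=> _; split=> //; exact: weq_refl.
rewrite valid_Lcons => /andP[Hg Hs]; have [H1 H2 H3] := IH _ Hs.
have E : Lw ((i :: s) ++ rev (i :: s)) =
         [:: (Sig i, false)] ++ Lw (s ++ rev s) ++ [:: (Sig i, false)].
  by rewrite /Lw rev_cons -cats1 /= !map_cat catA.
have Hv : valid e wD A (Lw ((i :: s) ++ rev (i :: s))).
  rewrite E valid_cat /= /ldef /= Hg /= valid_cat H1 H2 /=.
  by rewrite /ldef /= src_sref snk_sref orbC Hg.
split=> //.
  by rewrite E /= -endpt_cat H2 /= sref_invol.
rewrite E; apply: weq_trans.
  apply: weq_cong; first exact: H3.
  by rewrite -E.
have := @weq_rel _ e wD A [::] _ _ [::] (rel_sq (g := Sig i) Hg); rewrite /=; apply.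
by rewrite /= /ldef /= Hg /= src_sref snk_sref orbC Hg.
Qed.

End Gen2.

From mathcomp Require Import all_order all_algebra zify.
Import Order.TTheory GRing.Theory Num.Theory.

Section Heights.
Variables (V : finType) (e : rel V).
Hypothesis esym : symmetric e.
Hypothesis eirr : irreflexive e.
Local Open Scope ring_scope.
Implicit Types (i j x y : V) (A : {set V * V}) (s : seq V).

Definition hT := {ffun V -> int}.
Implicit Types (h m : hT).

Definition sinkh h i := [forall y, e i y ==> (h i < h y)].
Definition srch h i := [forall y, e i y ==> (h y < h i)].
Definition extr h i := sinkh h i || srch h i.
Definition good h := forall x y, e x y -> (h x == h y + 1) || (h y == h x + 1).
Definition step h i : hT :=
  [ffun x => if x == i then (if sinkh h i then h x + 2 else h x - 2) else h x].
Fixpoint hend h s := if s is i :: s' then hend (step h i) s' else h.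
Fixpoint vv h s := if s is i :: s' then extr h i && vv (step h i) s' else true.
Definition ori h : {set V * V} := [set p | e p.1 p.2 && (h p.2 < h p.1)].

Lemma sinkhE h i : sinkh h i = [forall y, e i y ==> (h i < h y)]. Proof. by []. Qed.
Lemma srchE h i : srch h i = [forall y, e i y ==> (h y < h i)]. Proof. by []. Qed.
Lemma extrE h i : extr h i = sinkh h i || srch h i. Proof. by []. Qed.

Lemma sinkhP h i y : sinkh h i -> e i y -> h i < h y.
Proof. by move/forallP/(_ y)/implyP. Qed.
Lemma srchP h i y : srch h i -> e i y -> h y < h i.
Proof. by move/forallP/(_ y)/implyP. Qed.
Lemma goodP h x y : good h -> e x y -> h x = h y + 1 \/ h y = h x + 1.
Proof. by move=> G /G /orP[/eqP|/eqP]; [left|right]. Qed.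

Lemma stepE h i x : step h i x =
  if x == i then (if sinkh h i then h x + 2 else h x - 2) else h x.
Proof. by rewrite ffunE. Qed.

Lemma src_ori h i : is_source e i (ori h) = srch h i.
Proof. by apply/forallP/forallP=> H y; move: (H y); rewrite inE /=; case: (e i y). Qed.
Lemma snk_ori h i : is_sink e i (ori h) = sinkh h i.
Proof. by apply/forallP/forallP=> H y; move: (H y); rewrite inE /= [e y i]esym; case: (e i y). Qed.

Lemma srch_nsink h i : extr h i -> ~~ sinkh h i -> srch h i.
Proof. by case/orP=> [->|]. Qed.

Lemma ori_step h i : good h -> extr h i -> sref i (ori h) = ori (step h i).
Proof.
move=> G X; apply/setP=> [[x y]]; rewrite !inE /= !stepE.
have Hs : sinkh h i -> forall z, e i z -> h z = h i + 1.
  by move=> S z E; have := sinkhP S E; case: (goodP G E) => ->; lia.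
have Hr : ~~ sinkh h i -> forall z, e i z -> h z = h i - 1.
  move=> S z E; have := srchP (srch_nsink X S) E.
  by case: (goodP G E) => ->; lia.
case: (eqVneq x i) => [->|xi]; case: (eqVneq y i) => [->|yi] /=.
- by rewrite eirr.
- rewrite esym; case E: (e i y) => //=.
  by case S: (sinkh h i); [rewrite (Hs S y E)|rewrite (Hr (negbT S) y E)]; lia.
- rewrite [e x i]esym; case E: (e i x) => //=.
  by case S: (sinkh h i); [rewrite (Hs S x E)|rewrite (Hr (negbT S) x E)]; lia.
- by [].
Qed.

Lemma good_step h i : good h -> extr h i -> good (step h i).
Proof.
move=> G X x y E; rewrite !stepE.
have Hs : sinkh h i -> forall z, e i z -> h z = h i + 1.
  by move=> S z E'; have := sinkhP S E'; case: (goodP G E') => ->; lia.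
have Hr : ~~ sinkh h i -> forall z, e i z -> h z = h i - 1.
  move=> S z E'; have := srchP (srch_nsink X S) E'.
  by case: (goodP G E') => ->; lia.
case: (eqVneq x i) => [xi|xi]; case: (eqVneq y i) => [yi|yi] /=.
- by move: E; rewrite xi yi eirr.
- rewrite xi in E *; case S: (sinkh h i);
   [rewrite (Hs S y E)|rewrite (Hr (negbT S) y E)]; apply/orP; lia.
- rewrite yi in E *; rewrite esym in E; case S: (sinkh h i);
   [rewrite (Hs S x E)|rewrite (Hr (negbT S) x E)]; apply/orP; lia.
- exact: G.
Qed.

Lemma good_hend h s : good h -> vv h s -> good (hend h s).
Proof.
elim: s h => [|i s IH] h //= G /andP[X V1]; exact: IH (good_step G X) V1.
Qed.

Lemma valid_ori wD h s : good h -> valid e wD (ori h) (Lw s) = vv h s.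
Proof.
elim: s h => [|i s IH] h G //=.
rewrite /ldef /= src_ori snk_ori /extr orbC.
case X: (sinkh h i || srch h i) => //=.
by rewrite ori_step // IH //; apply: good_step.
Qed.

Lemma endpt_ori h s : good h -> vv h s -> endpt (ori h) (Lw s) = ori (hend h s).
Proof.
elim: s h => [|i s IH] h G //= /andP[X V1].
by rewrite ori_step // IH //; apply: good_step.
Qed.

End Heights.

Section Loops.
Variables (V : finType) (e : rel V).
Hypothesis esym : symmetric e.
Hypothesis eirr : irreflexive e.
Local Open Scope ring_scope.
Implicit Types (i j x y : V) (A : {set V * V}) (s u v t : seq V) (h m : hT V).

Notation sinkh := (sinkh e). Notation srch := (srch e). Notation extr := (extr e).
Notation good := (good e). Notation step := (step e). Notation hend := (hend e).
Notation vv := (vv e). Notation ori := (ori e).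

Definition pot m h : nat := (\sum_(x : V) absz (h x - m x))%N.
Definition geb m h : bool := [forall x, m x <= h x].
Fixpoint abv m h s : bool :=
  geb m h && (if s is i :: s' then abv m (step h i) s' else true).
Fixpoint meas m h s : nat :=
  if s is i :: s' then (pot m h + meas m (step h i) s')%N else 0%N.
Fixpoint allup h s : bool := if s is i :: s' then sinkh h i && allup (step h i) s' else true.
Fixpoint alldown h s : bool :=
  if s is i :: s' then ~~ sinkh h i && alldown (step h i) s' else true.

Lemma hend_cat h u t : hend h (u ++ t) = hend (hend h u) t.
Proof. by elim: u h => //= i u IH h. Qed.
Lemma vv_cat h u t : vv h (u ++ t) = vv h u && vv (hend h u) t.
Proof. by elim: u h => //= i u IH h; rewrite IH andbA. Qed.
Lemma meas_cat m h u t : meas m h (u ++ t) = (meas m h u + meas m (hend h u) t)%N.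
Proof. by elim: u h => //= i u IH h; rewrite IH addnA. Qed.
Lemma abv_geb m h s : abv m h s -> geb m h.
Proof. by case: s => [|i s] /= /andP[]. Qed.
Lemma abv_cat m h u t : abv m h (u ++ t) = abv m h u && abv m (hend h u) t.
Proof.
elim: u h => [|i u IH] h /=.
  by rewrite andbT; apply/idP/andP => [H|[]//]; split=> //; exact: abv_geb H.
by rewrite IH andbA.
Qed.
Lemma allup_cat h u t : allup h (u ++ t) = allup h u && allup (hend h u) t.
Proof. by elim: u h => //= i u IH h; rewrite IH andbA. Qed.
Lemma alldown_cat h u t : alldown h (u ++ t) = alldown h u && alldown (hend h u) t.
Proof. by elim: u h => //= i u IH h; rewrite IH andbA. Qed.
Lemma Lw_cat u t : Lw (u ++ t) = Lw u ++ Lw t.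
Proof. exact: map_cat. Qed.

Lemma allup_mono h s x : allup h s -> h x <= hend h s x.
Proof.
elim: s h => [|i s IH] h //= /andP[S A]; apply: le_trans (IH _ A).
rewrite stepE S; case: (x == i) => //; lia.
Qed.
Lemma alldown_mono h s x : alldown h s -> hend h s x <= h x.
Proof.
elim: s h => [|i s IH] h //= /andP[S A]; apply: le_trans (IH _ A) _.
rewrite stepE (negbTE S); case: (x == i) => //; lia.
Qed.

Lemma step_updown h i : sinkh h i -> ~~ sinkh (step h i) i -> step (step h i) i = h.
Proof.
move=> S1 S2; apply/ffunP=> x; rewrite !stepE (negbTE S2) S1.
case: (eqVneq x i) => [->|] //=; lia.
Qed.

Lemma sinkh_far h i j : j != i -> ~~ e j i -> sinkh (step h i) j = sinkh h j.
Proof.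
move=> ji nji; rewrite !sinkhE; apply: eq_forallb => y.
rewrite !stepE (negbTE ji); case: (eqVneq y i) => [->|//].
by rewrite (negbTE nji).
Qed.
Lemma srch_far h i j : j != i -> ~~ e j i -> srch (step h i) j = srch h j.
Proof.
move=> ji nji; rewrite !srchE; apply: eq_forallb => y.
rewrite !stepE (negbTE ji); case: (eqVneq y i) => [->|//].
by rewrite (negbTE nji).
Qed.

Lemma pot_lt m h1 h2 x0 : (forall x, m x <= h1 x) ->
  (forall x, h1 x <= h2 x) -> h1 x0 < h2 x0 -> (pot m h1 < pot m h2)%N.
Proof.
move=> G1 L1 L0; rewrite /pot (bigD1 x0) //= [X in (_ < X)%N](bigD1 x0) //=.
have := G1 x0; have := L1 x0.
have : (\sum_(i | i != x0) absz (h1 i - m i) <= \sum_(i | i != x0) absz (h2 i - m i))%N.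
  apply: leq_sum => x _; have := G1 x; have := L1 x; lia.
lia.
Qed.

Lemma gebP m h x : geb m h -> m x <= h x.
Proof. by move/forallP. Qed.

Lemma arith1 (a b : int) : (b = a + 1 \/ a = b + 1) -> a + 2 < b -> False.
Proof. lia. Qed.

Lemma arith3 (a : int) (b c : bool) : (if c then a - 2 else a) <= (if b then a + 2 else a).
Proof. case: b; case: c; lia. Qed.
Lemma arith4 (a : int) : a < a + 2.
Proof. lia. Qed.

Definition smaller m h s' s :=
  ((size s' < size s)%N || ((size s' == size s) && (meas m h s' < meas m h s)%N)).

Lemma peak_red m h u i j v : good h -> vv h (u ++ [:: i, j & v]) ->
  abv m h (u ++ [:: i, j & v]) -> sinkh (hend h u) i -> ~~ sinkh (step (hend h u) i) j ->
  exists s', [/\ vv h s', hend h s' = hend h (u ++ [:: i, j & v]), abv m h s',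
     weq e false (ori h) (Lw (u ++ [:: i, j & v])) (Lw s') & smaller m h s' (u ++ [:: i, j & v])].
Proof.
move=> G; rewrite vv_cat abv_cat hend_cat => /andP[Vu /= /and3P[Xi Xj Vv]].
case/andP=> Au /= /and3P[Gu Gi Av] Si NSj.
have Gj := abv_geb Av.
set hu := hend h u in Xi Xj Vv Gu Gi Gj Av Si NSj *.
have Ghu : good hu by apply: good_hend.
have Vs : valid e false (ori h) (Lw (u ++ [:: i, j & v])).
  by rewrite valid_ori // vv_cat Vu /= Xi Xj Vv.
have Eu : endpt (ori h) (Lw u) = ori hu by rewrite endpt_ori.
case: (eqVneq i j) => [Eij|ij].
  subst j.
  have E := step_updown Si NSj.
  exists (u ++ v); split.
  - by rewrite vv_cat Vu -/hu -E.
  - by rewrite !hend_cat /= -/hu E.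
  - by rewrite abv_cat Au -/hu -E Av.
  - rewrite !Lw_cat.
    have -> : Lw [:: i, i & v] = [:: (Sig i, false); (Sig i, false)] ++ Lw v by [].
    have Hr : rel_at e false (endpt (ori h) (Lw u)) [:: (Sig i, false); (Sig i, false)] [::].
      by rewrite Eu; apply: rel_sq => /=; rewrite src_ori snk_ori // orbC.
    by have := weq_rel Hr; apply; move: Vs; rewrite Lw_cat.
  - by rewrite /smaller !size_cat /= ltn_add2l ltnS leqnSn.
have Rj : srch (step hu i) j by apply: srch_nsink.
have nij : ~~ e i j.
  apply/negP=> Eij; have := sinkhP Si Eij; rewrite esym in Eij.
  have := srchP Rj Eij; rewrite !stepE eqxx eq_sym (negbTE ij) Si.
  by move=> H _; apply: arith1 (goodP Ghu Eij) H.
have nji : ~~ e j i by rewrite esym.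
have ji : j != i by rewrite eq_sym.
have Sj0 : sinkh hu j = false by rewrite -(sinkh_far _ ji nji) (negbTE NSj).
have Rj0 : srch hu j by rewrite -(srch_far _ ji nji).
have Si1 : sinkh (step hu j) i by rewrite  sinkh_far.
have Ecom : step (step hu i) j = step (step hu j) i.
  apply/ffunP=> x; rewrite !stepE (negbTE NSj) Si Si1 Sj0.
  by case: (x == j); case: (x == i); rewrite /= ?addrK ?subrK.
have Gj2 : geb m (step hu j).
  apply/forallP=> x; have := gebP x Gj; have := gebP x Gu.
  rewrite !stepE Sj0 (negbTE NSj) Si.
  case: (eqVneq x j) => [->|xj] /=; rewrite ?(negbTE ji) ?eqxx /=;
    by move=> H1 H2; first [exact: H1 | exact: H2].
exists (u ++ [:: j, i & v]); split.
- by rewrite vv_cat Vu -/hu /= extrE Rj0 orbT extrE Si1 -Ecom Vv.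
- by rewrite !hend_cat /= -/hu Ecom.
- by rewrite abv_cat Au -/hu /= Gu Gj2 -Ecom Av.
- rewrite !Lw_cat; apply: weq_sym.
  have -> : Lw [:: i, j & v] = [:: (Sig i, false); (Sig j, false)] ++ Lw v by [].
  have -> : Lw [:: j, i & v] = [:: (Sig j, false); (Sig i, false)] ++ Lw v by [].
  have Hr : rel_at e false (endpt (ori h) (Lw u)) [:: (Sig j, false); (Sig i, false)]
                                                  [:: (Sig i, false); (Sig j, false)].
    rewrite Eu; apply: R2 => //.
      by rewrite -[[:: _; _]]/(Lw [:: j; i]) valid_ori //= extrE Rj0 orbT /= extrE Si1.
    by rewrite -[[:: _; _]]/(Lw [:: i; j]) valid_ori //= Xi /= Xj.
  apply: (weq_rel Hr).
  by rewrite -[_ ++ Lw v]/(Lw [:: j, i & v]) -Lw_cat valid_ori // vv_cat Vu -/hu /= extrE Rj0 orbT extrE Si1 -Ecom Vv.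
- rewrite /smaller !size_cat eqxx ltnn /= !meas_cat /= -/hu ltn_add2l ltn_add2l -Ecom ltn_add2r.
  apply: (@pot_lt _ _ _ i).
  + by move=> x; apply: gebP.
  + by move=> x; rewrite !stepE Sj0 Si; apply: arith3.
  + by rewrite !stepE Sj0 Si (negbTE ij) eqxx; apply: arith4.
Qed.

End Loops.

Section Closed.
Variables (V : finType) (e : rel V).
Hypothesis esym : symmetric e.
Hypothesis eirr : irreflexive e.
Local Open Scope ring_scope.
Implicit Types (i j x y : V) (A : {set V * V}) (s u v t : seq V) (h m : hT V).

Notation sinkh := (sinkh e). Notation srch := (srch e). Notation extr := (extr e).
Notation good := (good e). Notation step := (step e). Notation hend := (hend e).
Notation vv := (vv e). Notation ori := (ori e).
Notation allup := (allup e). Notation alldown := (alldown e).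
Notation meas := (meas e). Notation abv := (abv e).

Lemma peak_or h s :
  (exists u i j v, s = u ++ [:: i, j & v] /\ sinkh (hend h u) i /\ ~~ sinkh (step (hend h u) i) j)
  \/ (forall u i v, s = u ++ i :: v -> sinkh (hend h u) i -> allup (step (hend h u) i) v).
Proof.
elim: s h => [|i s IH] h.
  by right=> [[|? ?]] ? ?.
case: (IH (step h i)) => [[u [a [b [v [E [S1 S2]]]]]]|NP].
  by left; exists (i :: u), a, b, v; rewrite E.
case Si: (sinkh h i).
  case: s IH NP => [|j s] IH NP.
    by right=> [[|b [|? ?]]] a v //= [<- <-].
  case Sj: (sinkh (step h i) j).
    right=> [[|b u]] a v /= [Eb E].
      by subst a v => _ /=; rewrite Sj /=; apply: (NP [::] j s).
    by subst b => /(NP u a v E).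
  by left; exists [::], i, j, s; rewrite /= Si Sj.
right=> [[|b u]] a v /= [Eb E].
  by subst a; rewrite Si.
by subst b => /(NP u a v E).
Qed.

Lemma down_or_up h s : alldown h s \/ exists u j v, s = u ++ j :: v /\ sinkh (hend h u) j.
Proof.
elim: s h => [|i s IH] h /=; first by left.
case Si: (sinkh h i).
  by right; exists [::], i, s.
case: (IH (step h i)) => [->|[u [j [v [E S]]]]]; first by left.
by right; exists (i :: u), j, v; rewrite E.
Qed.

Lemma arith5 (a b : int) : a + 2 <= b -> b = a -> False.
Proof. lia. Qed.
Lemma arith6 (a b : int) : b <= a - 2 -> b = a -> False.
Proof. lia. Qed.

Lemma closed_null n N m h s : size s = n -> meas m h s = N -> good h -> vv h s ->
  hend h s = h -> abv m h s -> weq e false (ori h) (Lw s) [::].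
Proof.
elim/ltn_ind: n N m h s => n IHn N; elim/ltn_ind: N => N IHN m.
have IH : forall h' s'', good h' -> vv h' s'' -> hend h' s'' = h' -> abv m h' s'' ->
    ((size s'' < n)%N || ((size s'' == n) && (meas m h' s'' < N)%N)) ->
    weq e false (ori h') (Lw s'') [::].
  move=> hh ss GG VV HH AA /orP[lt|/andP[/eqP eq lt]].
    exact: (IHn _ lt _ m hh ss erefl erefl).
  exact: (IHN _ lt m hh ss eq erefl).
move=> h s Hn HN G Vs Hs As.
have red : forall h1 s1, good h1 -> vv h1 s1 -> hend h1 s1 = h1 -> abv m h1 s1 ->
    size s1 = n -> meas m h1 s1 = N ->
    (exists u i j v, s1 = u ++ [:: i, j & v] /\ sinkh (hend h1 u) i /\
                     ~~ sinkh (step (hend h1 u) i) j) ->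
    weq e false (ori h1) (Lw s1) [::].
  move=> h1 s1 G1 V1 H1 A1 Sz Ms [u [i [j [v [E [S1 S2]]]]]].
  subst s1; have [s' [V' H' A' W' Sm']] := peak_red esym eirr G1 V1 A1 S1 S2.
  apply: weq_trans W' _; apply: IH => //; first by rewrite H' H1.
  by move: Sm'; rewrite /smaller Sz Ms.
case: s Hn HN Vs Hs As => [|i s1] Hn HN Vs Hs As; first exact: weq_refl.
case: (peak_or h (i :: s1)) => [P|NP]; first exact: red P.
case Si: (sinkh h i).
  have := NP [::] i s1 erefl Si => /= /(allup_mono i).
  rewrite /= in Hs; rewrite Hs stepE eqxx Si => L.
  by exfalso; apply: arith5 L erefl.
set h1 := step h i.
have G1 : good h1 by apply: good_step => //; case/andP: Vs.
case: (down_or_up h1 s1) => [AD|[u [j [v [E Sj]]]]].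
  have := alldown_mono i AD; rewrite /= in Hs; rewrite Hs /h1 stepE eqxx Si => L.
  by exfalso; apply: arith6 L erefl.
have Ve : valid e false (ori h) (Lw (i :: s1)) by rewrite valid_ori.
have Ee : endpt (ori h) (Lw (i :: s1)) = ori h by rewrite endpt_ori // Hs.
apply: rotate Ve Ee _.
rewrite ori_step //; last by case/andP: Vs.
rewrite /= in Hs Vs As.
case/andP: Vs => Xi Vs1; case/andP: As => Gh As1.
have V' : vv h1 (s1 ++ [:: i]) by rewrite vv_cat Vs1 Hs /= Xi.
have H' : hend h1 (s1 ++ [:: i]) = h1 by rewrite hend_cat Hs.
have A' : abv m h1 (s1 ++ [:: i]) by rewrite abv_cat As1 Hs /= Gh (abv_geb As1).
case: (peak_or h1 (s1 ++ [:: i])) => [P|NP'].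
  apply: red => //; first by rewrite size_cat addn1.
  by rewrite meas_cat Hs /= -HN /= addn0 addnC.
exfalso; have := NP' u j (v ++ [:: i]); rewrite E -catA => /(_ erefl Sj).
rewrite allup_cat /= => /and3P[_ Si' _].
move: Si'; suff -> : hend (step (hend h1 u) j) v = h by rewrite Si.
by rewrite -Hs E hend_cat.
Qed.

End Closed.

Section ThA.
Variables (V : finType) (e : rel V).
Hypothesis esym : symmetric e.
Hypothesis eirr : irreflexive e.
Hypothesis noiso : forall x, exists y, e x y.
Local Open Scope ring_scope.
Implicit Types (i j x y : V) (A : {set V * V}) (s u v t : seq V) (h m : hT V).

Notation sinkh := (sinkh e). Notation srch := (srch e). Notation extr := (extr e).
Notation good := (good e). Notation step := (step e). Notation hend := (hend e).
Notation vv := (vv e). Notation ori := (ori e).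
Notation meas := (meas e). Notation abv := (abv e).

Lemma arith7 (a b : int) : b = a + 1 -> ~~ (a + 2 < b).
Proof. lia. Qed.
Lemma arith8 (a b : int) : b = a - 1 -> ~~ (b < a - 2).
Proof. lia. Qed.

Lemma step_inv h i : good h -> extr h i -> extr (step h i) i /\ step (step h i) i = h.
Proof.
move=> G X; have [y Ey] := noiso i.
have Hs : sinkh h i -> forall z, e i z -> h z = h i + 1.
  by move=> S z E; have := sinkhP S E; case: (goodP G E) => ->; lia.
have Hr : ~~ sinkh h i -> forall z, e i z -> h z = h i - 1.
  move=> S z E; have := srchP (srch_nsink X S) E.
  by case: (goodP G E) => ->; lia.
have neq : forall z, e i z -> (z == i) = false.
  by move=> z E; apply/negP=> /eqP Ez; move: E; rewrite Ez eirr.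
case S: (sinkh h i).
  have S' : sinkh (step h i) i = false.
    apply/negP=> /forallP/(_ y)/implyP/(_ Ey); rewrite !stepE eqxx neq // S.
    by rewrite (Hs S y Ey); apply/negP; apply: arith7.
  split.
    rewrite extrE S' /=; apply/forallP=> z; apply/implyP=> E.
    by rewrite !stepE eqxx neq // S (Hs S z E); lia.
  apply/ffunP=> x; rewrite !stepE S' S; case: (x == i) => //; lia.
have S' : sinkh (step h i) i.
  apply/forallP=> z; apply/implyP=> E.
  by rewrite !stepE eqxx neq // S (Hr (negbT S) z E); lia.
split; first by rewrite extrE S'.
apply/ffunP=> x; rewrite !stepE S' S; case: (x == i) => //; lia.
Qed.

Lemma revlift h s : good h -> vv h s -> vv (hend h s) (rev s) /\ hend (hend h s) (rev s) = h.
Proof.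
elim: s h => [|i s IH] h G //= /andP[X Vs].
have [X' E'] := step_inv G X.
have [V1 H1] := IH _ (good_step esym eirr G X) Vs.
rewrite rev_cons -cats1 vv_cat hend_cat V1 H1 /= X' E'; split=> //.
Qed.

Lemma abv_bound t : forall h m, (forall x, m x + 2 * (size t)%:Z <= h x) -> abv m h t.
Proof.
elim: t => [|i t IH] h m H /=.
  by rewrite andbT; apply/forallP=> x; have := H x; rewrite /=; lia.
apply/andP; split.
  by apply/forallP=> x; have := H x; lia.
apply: IH => x; have := H x; rewrite stepE; case: (x == i) => //=;
  [case: (sinkh h i) => /=|]; lia.
Qed.

Theorem thmA h s s' : good h -> vv h s -> vv h s' -> hend h s = hend h s' ->
  weq e false (ori h) (Lw s) (Lw s').
Proof.
move=> G Vs Vs' Eh.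
have [Vr Hr] := revlift G Vs'.
have Vw : vv h (s ++ rev s') by rewrite vv_cat Vs Eh Vr.
have Hw : hend h (s ++ rev s') = h by rewrite hend_cat Eh Hr.
set m : hT V := [ffun x => h x - 2 * (size (s ++ rev s'))%:Z].
have Aw : abv m h (s ++ rev s') by apply: abv_bound => x; rewrite ffunE; lia.
have C := closed_null esym eirr erefl erefl G Vw Hw Aw.
have Gs : good (hend h s) by apply: good_hend.
have Vrv : valid e false (ori (hend h s)) (Lw (rev s')) by rewrite valid_ori // Eh.
have [Vc Ec Wc] := cancel_rev Vrv.
rewrite revK in Vc Ec Wc.
have W1 : weq e false (ori h) (Lw s ++ [::] ++ [::]) (Lw s ++ Lw (rev s' ++ s') ++ [::]).
  apply: weq_cong; first by rewrite endpt_ori //; apply: weq_sym.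
  by rewrite cat0s cats0 valid_ori.
rewrite cat0s [Lw s ++ [::]]cats0 in W1.
apply: weq_trans W1 _.
have -> : Lw s ++ Lw (rev s' ++ s') ++ [::] = [::] ++ Lw (s ++ rev s') ++ Lw s'.
  by rewrite cats0 !Lw_cat catA.
have := @weq_cong _ e false (ori h) [::] (Lw (s ++ rev s')) [::] (Lw s') C.
rewrite /=; apply.
by rewrite -Lw_cat valid_ori // vv_cat Vw Hw.
Qed.

End ThA.

Section Gen3.
Variables (V : finType) (e : rel V).
Implicit Types (i j : V) (A : {set V * V}) (g : gen V) (w t : seq (letter V)) (s : seq V).

Notation Dl := (Dg V, false).

Lemma swapDS A i r : valid e true A [:: Dl, (Sig i, false) & r] =
                     valid e true A [:: (Sig i, false), Dl & r].
Proof.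
by rewrite /= /ldef /= src_opp snk_opp sref_opp orbC.
Qed.

Lemma valid_Dpass A s t : valid e true A (Dl :: Lw s ++ t) = valid e true A (Lw s ++ Dl :: t).
Proof.
elim: s A => [|i s IH] A; first by [].
have -> : Dl :: Lw (i :: s) ++ t = [:: Dl, (Sig i, false) & Lw s ++ t] by [].
have E1 : valid e true A [:: (Sig i, false), Dl & Lw s ++ t] =
  ldef e true A (Sig i, false) && valid e true (sref i A) (Dl :: Lw s ++ t) by [].
have E2 : valid e true A (Lw (i :: s) ++ Dl :: t) =
  ldef e true A (Sig i, false) && valid e true (sref i A) (Lw s ++ Dl :: t) by [].
by rewrite swapDS E1 E2 IH.
Qed.

Lemma Dpass A s t : valid e true A (Dl :: Lw s ++ t) ->
  weq e true A (Dl :: Lw s ++ t) (Lw s ++ Dl :: t).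
Proof.
elim: s A => [|i s IH] A Hv; first exact: weq_refl.
have Hv' : valid e true A [:: (Sig i, false), Dl & Lw s ++ t].
  by rewrite -swapDS.
apply: (@weq_trans _ _ _ _ _ [:: (Sig i, false), Dl & Lw s ++ t]).
  apply: weq_sym.
  have Hr : rel_at e true (endpt A [::]) [:: (Sig i, false); Dl] [:: Dl; (Sig i, false)].
    apply: R4 => //.
      by move: Hv'; rewrite /= /ldef /= => /andP[-> _].
    by move: Hv; rewrite /= /ldef /= => /andP[-> _].
  exact: (@weq_rel _ e true A [::] _ _ (Lw s ++ t) Hr Hv').
have := @weq_cong _ e true A [:: (Sig i, false)] (Dl :: Lw s ++ t) (Lw s ++ Dl :: t) [::].
rewrite !cats0; apply; last by [].
by apply: IH; move: Hv'; rewrite /= => /andP[].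
Qed.

Lemma Dpar A u d : valid e true A (u ++ nseq d Dl) ->
  weq e true A (u ++ nseq d Dl) (u ++ nseq (odd d) Dl).
Proof.
have step2 : forall n, valid e true A (u ++ nseq n.+2 Dl) ->
    weq e true A (u ++ nseq n.+2 Dl) (u ++ nseq n Dl).
  move=> n Hv.
  have Hr : rel_at e true (endpt A u) [:: Dl; Dl] [::] by apply: R3.
  exact: (@weq_rel _ e true A u _ _ (nseq n Dl) Hr Hv).
have vdrop : forall n, valid e true A (u ++ nseq n.+2 Dl) -> valid e true A (u ++ nseq n Dl).
  by move=> n Hv; have [<- _] := weq_props (step2 n Hv).
suff : forall n, (valid e true A (u ++ nseq n Dl) ->
          weq e true A (u ++ nseq n Dl) (u ++ nseq (odd n) Dl)) /\
        (valid e true A (u ++ nseq n.+1 Dl) ->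
          weq e true A (u ++ nseq n.+1 Dl) (u ++ nseq (odd n.+1) Dl)).
  by move=> H; case: (H d).
elim=> [|n [IH1 IH2]]; split=> //.
- by move=> _; exact: weq_refl.
- by move=> _; exact: weq_refl.
- move=> Hv; rewrite /= negbK.
  exact: weq_trans (step2 n Hv) (IH1 (vdrop n Hv)).
Qed.

Lemma valid_Lw_wD wD wD' A s : valid e wD A (Lw s) = valid e wD' A (Lw s).
Proof. by elim: s A => [|i s IH] A //=; rewrite IH. Qed.

Lemma valid_opp wD A s : valid e wD (Defs.opp A) (Lw s) = valid e wD A (Lw s).
Proof.
elim: s A => [|i s IH] A //=.
by rewrite /ldef /= src_opp snk_opp orbC sref_opp IH.
Qed.

Lemma endpt_opp A s : endpt (Defs.opp A) (Lw s) = Defs.opp (endpt A (Lw s)).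
Proof. by elim: s A => [|i s IH] A //=; rewrite sref_opp IH. Qed.

Lemma block_eq A x y : valid e true A (Lw x ++ Lw y) ->
  weq e true A (Lw x ++ Lw y) ((Lw x ++ [:: Dl]) ++ (Lw y ++ [:: Dl])).
Proof.
move=> Hv.
have Hv1 : valid e true A ((Lw x ++ Lw y) ++ [:: Dl; Dl] ++ [::]).
  by rewrite valid_cat Hv.
have Hr : rel_at e true (endpt A (Lw x ++ Lw y)) [:: Dl; Dl] [::] by apply: R3.
have W1 : weq e true A ((Lw x ++ Lw y) ++ [:: Dl; Dl]) (Lw x ++ Lw y).
  by have := weq_rel Hr Hv1; rewrite cat0s !cats0.
apply: weq_trans (weq_sym W1) _.
have -> : (Lw x ++ Lw y) ++ [:: Dl; Dl] = Lw x ++ (Lw y ++ Dl :: [:: Dl]) ++ [::].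
  by rewrite cats0 -catA.
have -> : (Lw x ++ [:: Dl]) ++ Lw y ++ [:: Dl] = Lw x ++ (Dl :: Lw y ++ [:: Dl]) ++ [::].
  by rewrite cats0 -catA.
apply: weq_sym; apply: weq_cong.
  apply: Dpass; rewrite valid_Dpass.
  by move: Hv1; rewrite -catA valid_cat => /andP[].
rewrite cats0 valid_cat.
move: Hv1; rewrite -catA valid_cat => /andP[-> /=].
by rewrite -valid_Dpass.
Qed.

Lemma loop_valid wD A X k : valid e wD A X -> endpt A X = A ->
  valid e wD A (flatten (nseq k X)) /\ endpt A (flatten (nseq k X)) = A.
Proof.
move=> Hv He; elim: k => [|k [IH1 IH2]] //=.
by rewrite valid_cat -endpt_cat He Hv IH1 IH2.
Qed.

Lemma flatten_cong wD A X Y k : valid e wD A X -> endpt A X = A -> weq e wD A X Y ->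
  weq e wD A (flatten (nseq k X)) (flatten (nseq k Y)).
Proof.
move=> Hv He W; have [HvY HeY] := weq_props W.
elim: k => [|k IH] /=; first exact: weq_refl.
have [V1 E1] := loop_valid k Hv He.
apply: (@weq_trans _ _ _ _ _ (Y ++ flatten (nseq k X))).
  have := @weq_cong _ e wD A [::] X Y (flatten (nseq k X)) W; apply.
  by rewrite /= valid_cat Hv He V1.
have := @weq_cong _ e wD A Y (flatten (nseq k X)) (flatten (nseq k Y)) [::].
rewrite !cats0; apply; first by rewrite -HeY He.
by rewrite valid_cat -HvY Hv -HeY He V1.
Qed.

End Gen3.

Section Endgame.
Variables (V : finType) (e : rel V) (Ip : {set V}).
Hypothesis esym : symmetric e.
Hypothesis eirr : irreflexive e.
Hypothesis econn : forall x y, connect e x y.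
Hypothesis bip : is_bipartition e Ip.
Local Open Scope ring_scope.
Implicit Types (i j x y : V) (A : {set V * V}) (s u v t : seq V) (h m : hT V).

Notation sinkh := (sinkh e). Notation srch := (srch e). Notation extr := (extr e).
Notation good := (good e). Notation step := (step e). Notation hend := (hend e).
Notation vv := (vv e). Notation ori := (ori e).

Definition b2z (b : bool) : int := if b then 1 else 0.
Definition h0c (c : int) : hT V := [ffun x => b2z (x \in Ip) + c].

Lemma bipE x y : e x y -> (y \in Ip) = ~~ (x \in Ip).
Proof. by move/bip; case: (x \in Ip); case: (y \in Ip). Qed.

Lemma good_h0c c : good (h0c c).
Proof.
move=> x y E; rewrite !ffunE (bipE E) /b2z.
by case: (x \in Ip) => /=; lia.
Qed.

Lemma G0E : Gamma0 e Ip = ori (h0c 0).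
Proof.
apply/setP=> [[x y]]; rewrite !inE /= !ffunE.
case E: (e x y) => //=; rewrite (bipE E) /b2z.
by case: (x \in Ip).
Qed.

Lemma batch_up t h : uniq t -> (forall a b, a \in t -> b \in t -> ~~ e a b) ->
  (forall a, a \in t -> sinkh h a) ->
  vv h t /\ hend h t = [ffun x => if x \in t then h x + 2 else h x].
Proof.
elim: t h => [|a t IH] h /= U N S.
  by split=> //; apply/ffunP=> x; rewrite ffunE.
case/andP: U => nat_ U.
have Sa : sinkh h a by apply: S; rewrite inE eqxx.
have S' : forall b, b \in t -> sinkh (step h a) b.
  move=> b bt; rewrite sinkh_far.
  - by apply: S; rewrite inE bt orbT.
  - by apply/negP=> /eqP Eb; move: nat_; rewrite -Eb bt.
  by apply: N; rewrite inE ?eqxx ?bt ?orbT.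
have N' : forall a b, a \in t -> b \in t -> ~~ e a b.
  by move=> a' b' A' B'; apply: N; rewrite inE ?A' ?B' orbT.
have [V1 H1] := IH _ U N' S'.
split; first by rewrite /extr Sa.
rewrite H1; apply/ffunP=> x; rewrite !ffunE inE ?stepE Sa.
case: (eqVneq x a) => [->|xa] /=; first by rewrite (negbTE nat_).
by case: (x \in t).
Qed.

Lemma batch_down t h : uniq t -> (forall a b, a \in t -> b \in t -> ~~ e a b) ->
  (forall a, a \in t -> srch h a && ~~ sinkh h a) ->
  vv h t /\ hend h t = [ffun x => if x \in t then h x - 2 else h x].
Proof.
elim: t h => [|a t IH] h /= U N S.
  by split=> //; apply/ffunP=> x; rewrite ffunE.
case/andP: U => nat_ U.
have /andP[Ra Sa] : srch h a && ~~ sinkh h a by apply: S; rewrite inE eqxx.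
have S' : forall b, b \in t -> srch (step h a) b && ~~ sinkh (step h a) b.
  move=> b bt.
  have ba : b != a by apply/negP=> /eqP Eb; move: nat_; rewrite -Eb bt.
  have nba : ~~ e b a by apply: N; rewrite inE ?eqxx ?bt ?orbT.
  by rewrite sinkh_far // srch_far //; apply: S; rewrite inE bt orbT.
have N' : forall a b, a \in t -> b \in t -> ~~ e a b.
  by move=> a' b' A' B'; apply: N; rewrite inE ?A' ?B' orbT.
have [V1 H1] := IH _ U N' S'.
split; first by rewrite /extr Ra orbT.
rewrite H1; apply/ffunP=> x; rewrite !ffunE inE ?stepE (negbTE Sa).
case: (eqVneq x a) => [->|xa] /=; first by rewrite (negbTE nat_).
by case: (x \in t).
Qed.

Definition blockUp := enum (~: Ip) ++ enum Ip.
Definition blockDown := enum Ip ++ enum (~: Ip).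

Lemma nadj_same a b : (a \in Ip) = (b \in Ip) -> ~~ e a b.
Proof. by move=> H; apply/negP=> /bipE; rewrite H; case: (b \in Ip). Qed.

Lemma nadjC : forall a b, a \in enum (~: Ip) -> b \in enum (~: Ip) -> ~~ e a b.
Proof.
by move=> a b; rewrite !mem_enum !inE => /negbTE A /negbTE B; apply: nadj_same; rewrite A B.
Qed.
Lemma nadjI : forall a b, a \in enum Ip -> b \in enum Ip -> ~~ e a b.
Proof. by move=> a b; rewrite !mem_enum => A B; apply: nadj_same; rewrite A B. Qed.

Lemma up_once c : vv (h0c c) blockUp /\ hend (h0c c) blockUp = h0c (c + 2).
Proof.
have S1 : forall a, a \in enum (~: Ip) -> sinkh (h0c c) a.
  move=> a; rewrite mem_enum inE => Aa; apply/forallP=> y; apply/implyP=> E.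
  rewrite !ffunE (bipE E) (negbTE Aa) /b2z /=; lia.
have [V1 H1] := batch_up (enum_uniq _) nadjC S1.
set h1 := hend (h0c c) (enum (~: Ip)) in V1 H1.
have S2 : forall a, a \in enum Ip -> sinkh h1 a.
  move=> a; rewrite mem_enum => Aa; apply/forallP=> y; apply/implyP=> E.
  rewrite H1 !ffunE !mem_enum !inE Aa (bipE E) Aa /b2z /=; lia.
have [V2 H2] := batch_up (enum_uniq _) nadjI S2.
rewrite /blockUp vv_cat hend_cat V1 -/h1 V2 H2 H1; split=> //.
apply/ffunP=> x; rewrite !ffunE !mem_enum !inE /b2z.
by case: (x \in Ip) => /=; lia.
Qed.

Lemma nsink h a y : e a y -> h y <= h a -> ~~ sinkh h a.
Proof. by move=> E L; apply/negP=> S; have := sinkhP S E; lia. Qed.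

Lemma down_once (noiso : forall x, exists y, e x y) c :
  vv (h0c c) blockDown /\ hend (h0c c) blockDown = h0c (c - 2).
Proof.
have S1 : forall a, a \in enum Ip -> srch (h0c c) a && ~~ sinkh (h0c c) a.
  move=> a; rewrite mem_enum => Aa; have [y Ey] := noiso a; apply/andP; split.
    apply/forallP=> z; apply/implyP=> E.
    rewrite !ffunE (bipE E) Aa /b2z /=; lia.
  apply: (nsink Ey); rewrite !ffunE (bipE Ey) Aa /b2z /=; lia.
have [V1 H1] := batch_down (enum_uniq _) nadjI S1.
set h1 := hend (h0c c) (enum Ip) in V1 H1.
have S2 : forall a, a \in enum (~: Ip) -> srch h1 a && ~~ sinkh h1 a.
  move=> a; rewrite mem_enum inE => Aa; have [y Ey] := noiso a; apply/andP; split.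
    apply/forallP=> z; apply/implyP=> E.
    rewrite H1 !ffunE !mem_enum (bipE E) (negbTE Aa) /b2z /=; lia.
  apply: (nsink Ey); rewrite H1 !ffunE !mem_enum (bipE Ey) (negbTE Aa) /b2z /=; lia.
have [V2 H2] := batch_down (enum_uniq _) nadjC S2.
rewrite /blockDown vv_cat hend_cat V1 -/h1 V2 H2 H1; split=> //.
apply/ffunP=> x; rewrite !ffunE !mem_enum !inE /b2z.
by case: (x \in Ip) => /=; lia.
Qed.

Lemma up_iter n c : vv (h0c c) (flatten (nseq n blockUp)) /\
  hend (h0c c) (flatten (nseq n blockUp)) = h0c (c + 2 * n%:Z).
Proof.
elim: n c => [|n IH] c /=.
  by split=> //; apply/ffunP=> x; rewrite !ffunE; lia.
have [V1 H1] := up_once c; have [V2 H2] := IH (c + 2).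
rewrite vv_cat hend_cat V1 H1 V2 H2; split=> //.
by apply/ffunP=> x; rewrite !ffunE; lia.
Qed.

Lemma down_iter (noiso : forall x, exists y, e x y) n c :
  vv (h0c c) (flatten (nseq n blockDown)) /\
  hend (h0c c) (flatten (nseq n blockDown)) = h0c (c - 2 * n%:Z).
Proof.
elim: n c => [|n IH] c /=.
  by split=> //; apply/ffunP=> x; rewrite !ffunE; lia.
have [V1 H1] := down_once noiso c; have [V2 H2] := IH (c - 2).
rewrite vv_cat hend_cat V1 H1 V2 H2; split=> //.
by apply/ffunP=> x; rewrite !ffunE; lia.
Qed.

Lemma hend_parity h s x : exists k : int, hend h s x = h x + 2 * k.
Proof.
elim: s h => [|i s IH] h /=; first by exists 0; lia.
have [k Hk] := IH (step h i); rewrite Hk stepE.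
case: (x == i); last by exists k.
by case: (sinkh h i); [exists (k + 1)|exists (k - 1)]; lia.
Qed.

Lemma ori_diff h h' x y : good h -> good h' -> ori h = ori h' -> e x y ->
  h' x - h x = h' y - h y.
Proof.
move=> G G' E Exy.
have : ((x, y) \in ori h) = ((x, y) \in ori h') by rewrite E.
rewrite !inE /= Exy /=.
by case: (goodP G Exy) => ->; case: (goodP G' Exy) => ->; lia.
Qed.

Lemma ori_shift h h' : good h -> good h' -> ori h = ori h' ->
  forall x y, h' x - h x = h' y - h y.
Proof.
move=> G G' E x y; have /connectP[p P ->] := econn x y.
elim: p x P => [|z p IH] x //= /andP[Exz P].
by rewrite (ori_diff G G' E Exz) IH.
Qed.

Lemma partA_heights (noiso : forall x, exists y, e x y) s :
  vv (h0c 0) s -> ori (hend (h0c 0) s) = ori (h0c 0) ->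
  exists k b, weq e false (ori (h0c 0)) (Lw s)
                (Lw (flatten (nseq k (if b then blockUp else blockDown)))).
Proof.
move=> Vs Eo.
case: s Vs Eo => [|x0 s1] Vs Eo; first by exists 0%N, true; exact: weq_refl.
set s := x0 :: s1 in Vs Eo *.
set h0 := h0c 0 in Vs Eo *.
have G0 : good h0 by apply: good_h0c.
have GE : good (hend h0 s) by apply: good_hend.
have Sh := ori_shift G0 GE (Logic.eq_sym Eo).
have [k Hk] := hend_parity h0 s x0.
have Hall : forall y, hend h0 s y = h0 y + 2 * k.
  by move=> y; have := Sh x0 y; rewrite Hk; lia.
case: k Hall {Hk} => n Hall.
  have [V' H'] := up_iter n 0.
  exists n, true; apply: thmA => //.
  rewrite H'; apply/ffunP=> y; rewrite Hall !ffunE; lia.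
have [V' H'] := down_iter noiso n.+1 0.
exists n.+1, false; apply: thmA => //.
rewrite H'; apply/ffunP=> y; rewrite Hall !ffunE; lia.
Qed.

End Endgame.

Section PartA.
Variables (V : finType) (e : rel V) (Ip : {set V}).
Hypothesis esym : symmetric e.
Hypothesis eirr : irreflexive e.
Hypothesis econn : forall x y, connect e x y.
Hypothesis bip : is_bipartition e Ip.
Implicit Types (i j x y : V) (A : {set V * V}) (s u v t : seq V).

Definition sigs (w : seq (letter V)) : seq V :=
  pmap (fun l : letter V => if l.1 is Sig i then Some i else None) w.

Lemma nl_sigs A w : valid e false A w -> map (@nl V) w = Lw (sigs w).
Proof.
elim: w A => [|[g b] w IH] A //=.
case: g => [i|] /=; last by rewrite /ldef; case: (b).
by case/andP=> _ /IH ->.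
Qed.

Lemma Lw_flatten k (b : seq V) : Lw (flatten (nseq k b)) = flatten (nseq k (Lw b)).
Proof. by elim: k => //= k IH; rewrite Lw_cat IH. Qed.

Lemma iso_valid A x n : (forall y, ~~ e x y) -> valid e false A (Lw (nseq n x)).
Proof.
move=> Hx; elim: n A => [|n IH] A //=; rewrite IH andbT /ldef /=.
by apply/orP; left; apply/forallP=> y; rewrite (negbTE (Hx y)).
Qed.

Lemma iso_red A x n : (forall y, ~~ e x y) ->
  weq e false A (Lw (nseq n x)) (Lw (nseq (odd n) x)).
Proof.
move=> Hx.
have step2 : forall m, weq e false A (Lw (nseq m.+2 x)) (Lw (nseq m x)).
  move=> m.
  have Hr : rel_at e false (endpt A [::]) [:: (Sig x, false); (Sig x, false)] [::].
    apply: rel_sq => /=; apply/orP; left; apply/forallP=> y; by rewrite (negbTE (Hx y)).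
  exact: (@weq_rel _ e false A [::] _ _ (Lw (nseq m x)) Hr (iso_valid A m.+2 Hx)).
suff : forall m, weq e false A (Lw (nseq m x)) (Lw (nseq (odd m) x)) /\
                weq e false A (Lw (nseq m.+1 x)) (Lw (nseq (odd m.+1) x)).
  by case/(_ n).
elim=> [|m [IH1 IH2]]; split=> //; try exact: weq_refl.
by rewrite /= negbK; exact: weq_trans (step2 m) IH1.
Qed.

Definition Xblk (b : bool) : seq (letter V) :=
  if b then SigmaW (~: Ip) ++ SigmaW Ip else SigmaW Ip ++ SigmaW (~: Ip).

Lemma ori_h0c_shift c : ori e (h0c Ip c) = ori e (h0c Ip 0).
Proof. by apply/setP=> [[x y]]; rewrite !inE !ffunE /=; case: (e x y) => //=; lia. Qed.

Lemma partA w : valid e false (Gamma0 e Ip) w -> endpt (Gamma0 e Ip) w = Gamma0 e Ip ->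
  exists k b, [/\ weq e false (Gamma0 e Ip) w (flatten (nseq k (Xblk b))),
     valid e false (Gamma0 e Ip) (Xblk b) & endpt (Gamma0 e Ip) (Xblk b) = Gamma0 e Ip].
Proof.
move=> Vw Ew.
have W1 := norm_flags Vw; rewrite (nl_sigs Vw) in W1.
set s := sigs w in W1.
have [Vs0 Es0] := weq_props W1.
have Vs : valid e false (Gamma0 e Ip) (Lw s) by rewrite -Vs0.
have Es : endpt (Gamma0 e Ip) (Lw s) = Gamma0 e Ip by rewrite -Es0.
have G00 : good e (h0c Ip 0) := good_h0c bip 0.
case: (boolP [exists x, [forall y, ~~ e x y]]) => [/existsP[x /forallP Hx]|Hn].
  have Hall : forall y, y = x.
    move=> y; have /connectP[p P ->] := econn x y.
    by case: p P => [|z p] //= /andP[E _]; move: (Hx z); rewrite E.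
  have Es1 : s = nseq (size s) x.
    by apply/all_pred1P; apply/allP=> y _; rewrite (Hall y) /=.
  have Cv : #|V| = 1%N by apply: (@eq_card1 _ x) => y; rewrite (Hall y) !inE eqxx.
  have Eb : enum (~: Ip) ++ enum Ip = [:: x].
    have : size (enum (~: Ip) ++ enum Ip) = 1%N by rewrite size_cat -!cardE addnC cardsC.
    case: (enum (~: Ip) ++ enum Ip) => [|a [|? ?]] //= _.
    by rewrite (Hall a).
  have Xt : Xblk true = Lw [:: x] by rewrite /Xblk -Lw_cat Eb.
  have Vx : valid e false (Gamma0 e Ip) (Lw [:: x]) by apply: (iso_valid _ 1).
  have Ex : endpt (Gamma0 e Ip) (Lw [:: x]) = Gamma0 e Ip.
    apply/setP=> [[a b]]; rewrite /= !inE /= (Hall a) (Hall b) eqxx /=.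
    by rewrite !(negbTE (Hx x)).
  exists (odd (size s)), true; rewrite Xt; split=> //.
  apply: weq_trans W1 _; rewrite {1}Es1.
  apply: weq_trans (iso_red _ _ Hx) _.
  by case: (odd (size s)) => /=; exact: weq_refl.
have noiso : forall x, exists y, e x y.
  move=> x; move/existsPn: Hn => /(_ x) /forallPn[y]; rewrite negbK => E.
  by exists y.
move: Vs Es W1; rewrite G0E // valid_ori // => Vs Es W1.
rewrite endpt_ori // in Es.
have [k [b Wk]] := partA_heights esym eirr econn bip noiso Vs Es.
exists k, b; split.
- apply: weq_trans W1 _; move: Wk; rewrite Lw_flatten.
  by case: (b) => /=; rewrite /Xblk /SigmaW -!Lw_cat.
- rewrite /Xblk /SigmaW; case: (b).
    by have [V1 _] := up_once bip 0; rewrite -Lw_cat valid_ori.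
  by have [V1 _] := down_once bip noiso 0; rewrite -Lw_cat valid_ori.
- rewrite /Xblk /SigmaW; case: (b).
    by have [V1 H1] := up_once bip 0; rewrite -Lw_cat endpt_ori // H1 ori_h0c_shift.
  by have [V1 H1] := down_once bip noiso 0; rewrite -Lw_cat endpt_ori // H1 ori_h0c_shift.
Qed.

End PartA.

Section PartB.
Variables (V : finType) (e : rel V) (Ip : {set V}).
Hypothesis esym : symmetric e.
Hypothesis eirr : irreflexive e.
Hypothesis econn : forall x y, connect e x y.
Hypothesis bip : is_bipartition e Ip.
Implicit Types (i j x y : V) (A : {set V * V}) (s u v t : seq V).
Notation Dl := (Dg V, false).

Definition isD (l : letter V) : bool := if l.1 is Dg then true else false.

Lemma pushD A w : valid e true A w -> all (fun l : letter V => ~~ l.2) w ->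
  weq e true A w (Lw (sigs w) ++ nseq (count isD w) Dl).
Proof.
elim: w A => [|[g b] r IH] A /=; first by move=> _ _; exact: weq_refl.
case/andP=> Hl Hr /andP[Hb Ha]; move/negbTE: Hb => Hb.
subst b.
have Wc : weq e true A ((g, false) :: r) ((g, false) :: (Lw (sigs r) ++ nseq (count isD r) Dl)).
  have := @weq_cong _ e true A [:: (g, false)] r (Lw (sigs r) ++ nseq (count isD r) Dl) [::].
  rewrite !cats0; apply; last by rewrite /= Hl.
  exact: IH.
have [Vc _] := weq_props Wc.
case: g Hl Hr Wc Vc => [i|] Hl Hr Wc Vc /=; first exact: Wc.
apply: weq_trans Wc _.
have := @Dpass _ e A (sigs r) (nseq (count isD r) Dl); apply.
by rewrite -Vc /= /ldef /= Hr.
Qed.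

Definition fB (c : bool * bool) : seq (letter V) :=
  let x := if c.1 then SigmaW Ip ++ [:: Dl] else SigmaW (~: Ip) ++ [:: Dl] in
  if c.2 then winv x else x.

Lemma flatten_map_nseq k (l : seq (bool * bool)) :
  flatten (map fB (flatten (nseq k l))) = flatten (nseq k (flatten (map fB l))).
Proof. by elim: k => //= k IH; rewrite map_cat flatten_cat IH. Qed.

Definition pairB (b : bool) : seq (bool * bool) :=
  if b then [:: (false, false); (true, false)] else [:: (true, false); (false, false)].

Lemma block_chain A k b : valid e true A (Xblk Ip b) -> endpt A (Xblk Ip b) = A ->
  weq e true A (flatten (nseq k (Xblk Ip b))) (flatten (map fB (flatten (nseq k (pairB b))))).
Proof.
move=> Hv He; rewrite flatten_map_nseq; apply: flatten_cong => //.
rewrite /pairB /fB /Xblk /SigmaW; case: b Hv He => /= Hv He; rewrite cats0.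
  by apply: (@block_eq _ e A (enum (~: Ip)) (enum Ip)).
by apply: (@block_eq _ e A (enum Ip) (enum (~: Ip))).
Qed.

Lemma Xblk_valid A b : valid e false A (Xblk Ip b) -> valid e true A (Xblk Ip b).
Proof.
rewrite /Xblk; case: b.
  change (valid e false A (Lw (enum (~: Ip)) ++ Lw (enum Ip)) ->
          valid e true A (Lw (enum (~: Ip)) ++ Lw (enum Ip))).
  by rewrite -Lw_cat (valid_Lw_wD e _ true).
change (valid e false A (Lw (enum Ip) ++ Lw (enum (~: Ip))) ->
        valid e true A (Lw (enum Ip) ++ Lw (enum (~: Ip)))).
by rewrite -Lw_cat (valid_Lw_wD e _ true).
Qed.

Local Open Scope ring_scope.
Definition hn : hT V := [ffun x => - b2z (x \in Ip)].

Lemma good_hn : good e hn.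
Proof.
move=> x y E; rewrite !ffunE (bipE bip E) /b2z.
by case: (x \in Ip) => /=; lia.
Qed.

Lemma ori_hn : ori e hn = Defs.opp (Gamma0 e Ip).
Proof.
apply/setP=> [[x y]]; rewrite !inE /= !ffunE esym.
case E: (e y x) => //=; rewrite (bipE bip E) /b2z.
by case: (y \in Ip) => /=; lia.
Qed.

Lemma hn_rev : vv e hn (rev (enum Ip)) /\ hend e hn (rev (enum Ip)) = h0c Ip 0.
Proof.
have U : uniq (rev (enum Ip)) by rewrite rev_uniq enum_uniq.
have N : forall a b, a \in rev (enum Ip) -> b \in rev (enum Ip) -> ~~ e a b.
  by move=> a b; rewrite !mem_rev; apply: nadjI.
have S : forall a, a \in rev (enum Ip) -> sinkh e hn a.
  move=> a; rewrite mem_rev mem_enum => Aa; apply/forallP=> y; apply/implyP=> E.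
  rewrite !ffunE (bipE bip E) Aa /b2z /=; lia.
have [V1 H1] := batch_up U N S.
split=> //; rewrite H1; apply/ffunP=> x; rewrite !ffunE mem_rev mem_enum /b2z.
by case: (x \in Ip) => /=; lia.
Qed.
Local Close Scope ring_scope.

Lemma partB w : valid e true (Gamma0 e Ip) w -> endpt (Gamma0 e Ip) w = Gamma0 e Ip ->
  exists bs, weq e true (Gamma0 e Ip) w (flatten (map fB bs)).
Proof.
set G := Gamma0 e Ip.
move=> Vw Ew.
have W1 := norm_flags Vw.
have [V1 E1] := weq_props W1.
have Al : all (fun l : letter V => ~~ l.2) (map (@nl V) w) by elim: (w) => //= l w0 ->.
have W2 := pushD (A := G) (w := map (@nl V) w) (ltac:(by rewrite -V1)) Al.
set s := sigs (map (@nl V) w) in W2.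
set d := count isD (map (@nl V) w) in W2.
have [V2 E2] := weq_props W2.
have Vd : valid e true G (Lw s ++ nseq d Dl) by rewrite -V2 -V1.
have W3 := Dpar Vd.
have [V3 E3] := weq_props W3.
have W123 : weq e true G w (Lw s ++ nseq (odd d) Dl).
  exact: weq_trans W1 (weq_trans W2 W3).
have Vo : valid e true G (Lw s ++ nseq (odd d) Dl) by rewrite -V3.
have Eo : endpt G (Lw s ++ nseq (odd d) Dl) = G by rewrite -E3 -E2 -E1.
case: (odd d) W123 Vo Eo => /= W123 Vo Eo.
  have Vs : valid e true G (Lw s) by move: Vo; rewrite valid_cat => /andP[].
  have Es : endpt G (Lw s) = Defs.opp G.
    by move: Eo; rewrite -endpt_cat /= => /(congr1 (@Defs.opp V)); rewrite opp_invol.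
  have [Vr Hr] := hn_rev.
  have Vrp : valid e false (Defs.opp G) (Lw (rev (enum Ip))).
    by rewrite -ori_hn valid_ori //; apply: good_hn.
  have Erp : endpt (Defs.opp G) (Lw (rev (enum Ip))) = G.
    by rewrite -ori_hn endpt_ori //; [rewrite Hr /G G0E | apply: good_hn].
  have Vl : valid e false G (Lw (s ++ rev (enum Ip))).
    by rewrite Lw_cat valid_cat (valid_Lw_wD e _ true) Vs Es.
  have El : endpt G (Lw (s ++ rev (enum Ip))) = G by rewrite Lw_cat -endpt_cat Es.
  have [k [b [Wk Vx Ex]]] := partA esym eirr econn bip Vl El.
  exists (flatten (nseq k (pairB b)) ++ [:: (true, false)]).
  rewrite map_cat flatten_cat /= cats0.
  apply: weq_trans W123 _.
  have [Vc Ec Wc] := cancel_rev (ltac:(by rewrite (valid_Lw_wD e _ false)) :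
                        valid e true (Defs.opp G) (Lw (rev (enum Ip)))).
  rewrite revK in Vc Ec Wc.
  have C1 : weq e true G (Lw s ++ [::] ++ [:: Dl]) (Lw s ++ Lw (rev (enum Ip) ++ enum Ip) ++ [:: Dl]).
    by apply: weq_cong; [rewrite Es; apply: weq_sym | ].
  have [VC1 _] := weq_props C1.
  apply: weq_trans C1 _.
  have Ecat : Lw s ++ Lw (rev (enum Ip) ++ enum Ip) ++ [:: Dl] =
            [::] ++ Lw (s ++ rev (enum Ip)) ++ (Lw (enum Ip) ++ [:: Dl]).
    by rewrite !Lw_cat !catA.
  have Vnew : valid e true G ([::] ++ Lw (s ++ rev (enum Ip)) ++ (Lw (enum Ip) ++ [:: Dl])).
    by rewrite -Ecat -VC1.
  rewrite Ecat.
  have C2 := @weq_cong _ e true G [::] _ _ (Lw (enum Ip) ++ [:: Dl]) (weq_ft Wk).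
  have C2' := C2 Vnew.
  have [VC2 _] := weq_props C2'.
  apply: weq_trans C2' _.
  have C3 := @weq_cong _ e true G [::] _ _ (Lw (enum Ip) ++ [:: Dl])
               (block_chain k (Xblk_valid Vx) Ex).
  have C3' := C3 (ltac:(by rewrite -VC2)).
  exact: C3'.
rewrite cats0 in W123 Vo Eo.
have Vs : valid e false G (Lw s) by rewrite (valid_Lw_wD e _ true).
have [k [b [Wk Vx Ex]]] := partA esym eirr econn bip Vs Eo.
exists (flatten (nseq k (pairB b))).
apply: weq_trans W123 _; apply: weq_trans (weq_ft Wk) _.
by apply: block_chain => //; apply: Xblk_valid.
Qed.

End PartB.

Theorem mainTheorem13 (V : finType) (e : rel V) (Ip : {set V}) :
  is_tree e -> is_bipartition e Ip ->
  let G0 := Gamma0 e Ip in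
  let Sp := SigmaW Ip in
  let Sm := SigmaW (~: Ip) in
  (* (a) Aut_{R_0(I)}(Gamma0) is generated by Sigma_+ Sigma_- and Sigma_- Sigma_+ *)
  (forall w, valid e false G0 w -> endpt G0 w = G0 ->
     in_gen2 e false G0 (Sm ++ Sp) (Sp ++ Sm) w) /\
  (* (b) Aut_{R(I)}(Gamma0) is generated by D Sigma_+ and D Sigma_- *)
  (forall w, valid e true G0 w -> endpt G0 w = G0 ->
     in_gen2 e true G0 (Sp ++ [:: (Dg V, false)]) (Sm ++ [:: (Dg V, false)]) w).
Proof.
case=> esym eirr econn _ bip G0 Sp Sm; split.
  move=> w Vw Ew; have [k [b [Wk _ _]]] := partA esym eirr econn bip Vw Ew.
  exists (nseq k (b, false)); rewrite map_nseq.
  by case: b Wk.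
move=> w Vw Ew; have [bs Wb] := partB esym eirr econn bip Vw Ew.
by exists bs.
Qed.
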